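(* For any metric spaces $(X,d_X)$ and $(Y,d_Y)$, $$\tilde d_{\mathrm{GH}}(X,Y)\le d_{\mathrm{GH}}(X,Y)\le 2\,\tilde d_{\mathrm{GH}}(X,Y).$$
   Context: For (not necessarily continuous) maps $f:X\to Y$, $g:Y\to X$: $\mathrm{dis}(f)=\sup_{x,x'\in X}|d_X(x,x')-d_Y(f(x),f(x'))|$ (similarly $\mathrm{dis}(g)$), $\mathrm{codis}(f,g)=\sup_{x\in X,y\in Y}|d_X(x,g(y))-d_Y(y,f(x))|$, and $\widetilde{\mathrm{codis}}(f,g)=\max\{\sup_{x\in X}d_X(x,g(f(x))),\sup_{y\in Y}d_Y(y,f(g(y)))\}$. The Gromov–Hausdorff distance is $d_{\mathrm{GH}}(X,Y)=\tfrac12\inf_{f,g}\max\{\mathrm{dis}(f),\mathrm{dis}(g),\mathrm{codis}(f,g)\}$, and the altered Gromov–Hausdorff distance is $\tilde d_{\mathrm{GH}}(X,Y)=\tfrac12\inf_{f,g}\max\{\mathrm{dis}(f),\mathrm{dis}(g),\widetilde{\mathrm{codis}}(f,g)\}$, both infima over all maps $f:X\to Y$, $g:Y\to X$. *)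

(* Defs.v *)
From mathcomp Require Import all_boot all_order all_algebra.
From mathcomp Require Import all_classical all_reals ereal.
Set Implicit Arguments. Unset Strict Implicit. Unset Printing Implicit Defensive.
Import Order.TTheory GRing.Theory Num.Theory.
Local Open Scope classical_set_scope.
Local Open Scope ring_scope.

Definition is_metric (R : realType) (T : Type) (d : T -> T -> R) : Prop :=
  [/\ (forall x y, 0 <= d x y),
      (forall x y, d x y = 0 <-> x = y),
      (forall x y, d x y = d y x) &
      (forall x y z, d x z <= d x y + d y z)].

Local Open Scope ereal_scope.

(* supremum of a family of nonnegative reals, with sup of the empty family = 0 *)
Definition esup0 (R : realType) (I : Type) (F : I -> R) : \bar R :=
  ereal_sup ([set 0] `|` range (fun i => (F i)%:E)).

Section GH.
Variables (R : realType) (X Y : Type) (dX : X -> X -> R) (dY : Y -> Y -> R).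

Definition dis (f : X -> Y) : \bar R :=
  esup0 (fun p : X * X => `|dX p.1 p.2 - dY (f p.1) (f p.2)|%R).

Definition dis' (g : Y -> X) : \bar R :=
  esup0 (fun p : Y * Y => `|dY p.1 p.2 - dX (g p.1) (g p.2)|%R).

Definition codis (f : X -> Y) (g : Y -> X) : \bar R :=
  esup0 (fun p : X * Y => `|dX p.1 (g p.2) - dY p.2 (f p.1)|%R).

Definition codis_alt (f : X -> Y) (g : Y -> X) : \bar R :=
  maxe (esup0 (fun x : X => dX x (g (f x))))
       (esup0 (fun y : Y => dY y (f (g y)))).

Definition dGH : \bar R :=
  (2^-1)%:E * ereal_inf (range (fun fg : (X -> Y) * (Y -> X) =>
     maxe (dis fg.1) (maxe (dis' fg.2) (codis fg.1 fg.2)))).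

Definition dGH_alt : \bar R :=
  (2^-1)%:E * ereal_inf (range (fun fg : (X -> Y) * (Y -> X) =>
     maxe (dis fg.1) (maxe (dis' fg.2) (codis_alt fg.1 fg.2)))).
End GH.

(* Main.v *)
Require Import Defs.
From mathcomp Require Import all_boot all_order all_algebra.
From mathcomp Require Import all_classical all_reals ereal.
From mathcomp Require Import lra.
Import Order.TTheory GRing.Theory Num.Theory.
Local Open Scope classical_set_scope.
Local Open Scope ring_scope.
Local Open Scope ereal_scope.

Lemma esup0_ge0 (R : realType) (I : Type) (F : I -> R) : 0 <= esup0 F.
Proof. by apply: ereal_sup_ubound; left. Qed.

Lemma esup0_ub (R : realType) (I : Type) (F : I -> R) i : (F i)%:E <= esup0 F.
Proof. by apply: ereal_sup_ubound; right; exists i. Qed.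

Lemma esup0_le (R : realType) (I : Type) (F : I -> R) (c : \bar R) :
  0 <= c -> (forall i, (F i)%:E <= c) -> esup0 F <= c.
Proof.
move=> c0 Hc; apply: ge_ereal_sup => z [->|[i _ <-]] //.
Qed.

Lemma esup0_leP (R : realType) (I : Type) (F : I -> R) (r : R) :
  esup0 F <= r%:E -> forall i, (F i <= r)%R.
Proof. by move=> H i; rewrite -lee_fin; apply: le_trans H; apply: esup0_ub. Qed.

Lemma max3_le (R : realType) (a b c c' : \bar R) :
  c <= c' -> maxe a (maxe b c) <= maxe a (maxe b c').
Proof.
move=> h.
rewrite !ge_max !le_max !lexx /= orbT /=.
by rewrite h !orbT.
Qed.

Arguments esup0_ub {R I} F i.
Arguments esup0_le {R I F c}.
Arguments esup0_leP {R I F r}.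
Arguments esup0_ge0 {R I F}.

Theorem proposition5p10 (R : realType) (X Y : Type)
  (dX : X -> X -> R) (dY : Y -> Y -> R)
  (hX : is_metric dX) (hY : is_metric dY) :
  dGH_alt dX dY <= dGH dX dY /\ dGH dX dY <= 2%:E * dGH_alt dX dY.
Proof.
case: hX => X0 Xeq Xsym Xtri; case: hY => Y0 Yeq Ysym Ytri.
set M := fun fg : (X -> Y) * (Y -> X) =>
     maxe (dis dX dY fg.1) (maxe (dis' dX dY fg.2) (codis dX dY fg.1 fg.2)).
set Ma := fun fg : (X -> Y) * (Y -> X) =>
     maxe (dis dX dY fg.1) (maxe (dis' dX dY fg.2) (codis_alt dX dY fg.1 fg.2)).
have h1 : forall fg, Ma fg <= M fg.
  case=> f g; rewrite /Ma /M /=.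
  apply: max3_le.
  rewrite /codis_alt ge_max; apply/andP; split; apply: esup0_le;
    try exact: esup0_ge0.
  - move=> x; apply: (le_trans _ (esup0_ub _ (x, f x))) => /=.
    by rewrite (proj2 (Yeq _ _) erefl) subr0 lee_fin ger0_norm.
  - move=> y; apply: (le_trans _ (esup0_ub _ (g y, y))) => /=.
    by rewrite (proj2 (Xeq _ _) erefl) sub0r normrN lee_fin ger0_norm.
have Ma0 : forall fg, 0 <= Ma fg.
  by case=> f g; rewrite /Ma le_max esup0_ge0.
have h2 : forall fg, M fg <= 2%:E * Ma fg.
  case=> f g.
  have := Ma0 (f, g).
  case E : (Ma (f, g)) => [r| |] // r0.
    have : Ma (f, g) <= r%:E by rewrite E.
    rewrite /Ma /= !ge_max => /and3P [Hf Hg].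
    move=> /andP [Hgf Hfg].
    have r0' : (0 <= r)%R by rewrite -lee_fin.
    have Hf' := esup0_leP Hf; have Hg' := esup0_leP Hg.
    have Hgf' := esup0_leP Hgf; have Hfg' := esup0_leP Hfg.
    rewrite -EFinM /=.
    have r2 : r%:E <= (2 * r)%:E by rewrite lee_fin; lra.
    rewrite (le_trans Hf r2) (le_trans Hg r2) /=.
    apply: esup0_le; first by rewrite lee_fin; lra.
    case=> x y /=; rewrite lee_fin ler_norml.
    have A := Hf' (g y, x); have B := Hfg' y; have C := Hgf' x.
    have D := Hg' (f x, y).
    move: A D; rewrite /= !ler_norml => /andP [A1 A2] /andP [D1 D2].
    have T1 := Ytri y (f (g y)) (f x).
    have T2 := Xtri x (g (f x)) (g y).
    have S1 := Xsym (g y) x. have S2 := Ysym (f x) y.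
    simpl in *.
    apply/andP; split; lra.
  by rewrite mulry gtr0_sg // mul1e leey.
have h0 : (0 <= (2^-1 : R)%:E) by rewrite lee_fin; lra.
rewrite /dGH /dGH_alt -/M -/Ma.
split.
  apply: lee_wpmul2l => //.
  apply: le_ereal_inf_tmp => z [fg _ <-].
  apply: le_trans (h1 fg).
  by apply: ereal_inf_lbound; exists fg.
set A := ereal_inf _; set B := ereal_inf _.
have hAB : (2^-1)%:E * A <= B.
  apply: le_ereal_inf_tmp => z [fg _ <-].
  have : A <= 2%:E * Ma fg.
    apply: le_trans (h2 fg).
    by apply: ereal_inf_lbound; exists fg.
  move/(lee_wpmul2l h0).
  by rewrite muleA -EFinM mulVf ?mul1e //.
apply: (le_trans hAB).
by rewrite muleA -EFinM mulfV ?mul1e //.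
Qed.
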